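(* Let $\mathcal C$ be a category, $I:\mathcal B\to\mathcal C$ the inclusion of a full subcategory with a left adjoint $S:\mathcal C\to\mathcal B$ (unit $\alpha:1\to IS$, counit $SI\cong1$), and $J:\mathcal D\to\mathcal C$ the inclusion of a full subcategory with a right adjoint $T:\mathcal C\to\mathcal D$ (unit $1\cong TJ$, counit $\epsilon:JT\to1$), and suppose $IS\epsilon:ISJT\to IS$ and $JT\alpha:JT\to JTIS$ are isomorphisms. Then the functors $JTI:\mathcal B\to\mathcal C$ and $ISJ:\mathcal D\to\mathcal C$ are full and faithful. *)

(* Defs.v *)
Set Implicit Arguments.
Unset Strict Implicit.

Record Category := {
  Obj :> Type;
  Hom : Obj -> Obj -> Type;
  cid : forall a, Hom a a;
  comp : forall x y z, Hom y z -> Hom x y -> Hom x z;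
  comp_id_l : forall x y (f : Hom x y), comp (cid y) f = f;
  comp_id_r : forall x y (f : Hom x y), comp f (cid x) = f;
  comp_assoc : forall x y z w (f : Hom x y) (g : Hom y z) (h : Hom z w),
      comp h (comp g f) = comp (comp h g) f
}.
Arguments Hom {c} _ _.
Arguments cid {c} a.
Arguments comp {c x y z} _ _.

Record Functor (C D : Category) := {
  fobj :> C -> D;
  fmap : forall a b, Hom a b -> Hom (fobj a) (fobj b);
  fmap_id : forall a, fmap (cid a) = cid (fobj a);
  fmap_comp : forall a b c (f : Hom a b) (g : Hom b c),
      fmap (comp g f) = comp (fmap g) (fmap f)
}.
Arguments fmap {C D} f0 {a b} _.

Definition IdFunctor (C : Category) : Functor C C.
Proof.
  refine {| fobj := fun a => a; fmap := fun a b f => f |}; reflexivity.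
Defined.

Definition CompFunctor (C D E : Category) (G : Functor D E) (F : Functor C D)
  : Functor C E.
Proof.
  refine {| fobj := fun a => G (F a); fmap := fun a b f => fmap G (fmap F f) |}.
  - intros a. rewrite !fmap_id. reflexivity.
  - intros a b c f g. rewrite !fmap_comp. reflexivity.
Defined.

Record NatTrans (C D : Category) (F G : Functor C D) := {
  ntc :> forall a, Hom (F a) (G a);
  naturality : forall a b (f : Hom a b),
      comp (fmap G f) (ntc a) = comp (ntc b) (fmap F f)
}.

Definition is_iso (C : Category) (a b : C) (f : Hom a b) : Prop :=
  exists g : Hom b a, comp g f = cid a /\ comp f g = cid b.

Definition Adjunction (C D : Category) (F : Functor C D) (G : Functor D C)
  (eta : NatTrans (IdFunctor C) (CompFunctor G F))
  (eps : NatTrans (CompFunctor F G) (IdFunctor D)) : Prop :=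
  (forall a : C, comp (eps (F a)) (fmap F (eta a)) = cid (F a)) /\
  (forall b : D, comp (fmap G (eps b)) (eta (G b)) = cid (G b)).

Definition FullSub (C : Category) (P : C -> Prop) : Category.
Proof.
  refine {| Obj := { x : C | P x };
            Hom := fun a b => Hom (proj1_sig a) (proj1_sig b);
            cid := fun a => cid (proj1_sig a);
            comp := fun a b c g f => comp g f |}.
  - intros; apply comp_id_l.
  - intros; apply comp_id_r.
  - intros; apply comp_assoc.
Defined.

Definition Incl (C : Category) (P : C -> Prop) : Functor (FullSub P) C.
Proof.
  refine {| fobj := fun a : FullSub P => proj1_sig a; fmap := fun a b f => f |};
    reflexivity.
Defined.

Definition full (C D : Category) (F : Functor C D) : Prop :=
  forall a b (g : Hom (F a) (F b)), exists f : Hom a b, fmap F f = g.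

Definition faithful (C D : Category) (F : Functor C D) : Prop :=
  forall a b (f f' : Hom a b), fmap F f = fmap F f' -> f = f'.

Arguments Adjunction {C D} F G eta eps.

(* Main.v *)
Require Import Defs.

Theorem propositionA5 (C : Category) (PB PD : C -> Prop)
  (S : Functor C (FullSub PB))
  (alpha : NatTrans (IdFunctor C) (CompFunctor (Incl PB) S))
  (beta : NatTrans (CompFunctor S (Incl PB)) (IdFunctor (FullSub PB)))
  (T : Functor C (FullSub PD))
  (gamma : NatTrans (IdFunctor (FullSub PD)) (CompFunctor T (Incl PD)))
  (eps : NatTrans (CompFunctor (Incl PD) T) (IdFunctor C))
  (adjSI : Adjunction S (Incl PB) alpha beta)
  (adjJT : Adjunction (Incl PD) T gamma eps)
  (hISeps : forall x : C, is_iso (fmap (Incl PB) (fmap S (eps x))))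
  (hJTalpha : forall x : C, is_iso (fmap (Incl PD) (fmap T (alpha x)))) :
  (full (CompFunctor (CompFunctor (Incl PD) T) (Incl PB)) /\
   faithful (CompFunctor (CompFunctor (Incl PD) T) (Incl PB))) /\
  (full (CompFunctor (CompFunctor (Incl PB) S) (Incl PD)) /\
   faithful (CompFunctor (CompFunctor (Incl PB) S) (Incl PD))).
Proof.
  destruct adjSI as [tri1 tri2]. destruct adjJT as [tri3 tri4].
  assert (natA : forall x y (f : Hom x y),
    @comp C _ _ _ (fmap S f) (alpha x) = comp (alpha y) f)
    by (intros; exact (naturality alpha f)).
  assert (natB : forall (b b' : FullSub PB) (f : @Hom (FullSub PB) b b'),
    @comp C _ _ _ f (beta b) = @comp C _ _ _ (beta b') (fmap S f))
    by (intros; exact (naturality beta f)).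
  assert (natE : forall x y (f : Hom x y),
    @comp C _ _ _ f (eps x) = @comp C _ _ _ (eps y) (fmap T f))
    by (intros; exact (naturality eps f)).
  assert (natG : forall (d d' : FullSub PD) (f : @Hom (FullSub PD) d d'),
    @comp C _ _ _ (fmap T f) (gamma d) = @comp C _ _ _ (gamma d') f)
    by (intros; exact (naturality gamma f)).
  simpl in tri1, tri2, tri3, tri4.
  assert (fS : forall x y z (f : Hom x y) (g : Hom y z),
    (fmap S (comp g f) : Hom (proj1_sig (S x)) (proj1_sig (S z)))
      = @comp C _ _ _ (fmap S g) (fmap S f)) by (intros; exact (fmap_comp S f g)).
  assert (fT : forall x y z (f : Hom x y) (g : Hom y z),
    (fmap T (comp g f) : Hom (proj1_sig (T x)) (proj1_sig (T z)))
      = @comp C _ _ _ (fmap T g) (fmap T f)) by (intros; exact (fmap_comp T f g)).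
  cbn in *.
  assert (R1' : forall x (b : {x : C | PB x}) (h : Hom (proj1_sig (S x)) (proj1_sig b)),
    h = @comp C _ _ _ (beta b) (fmap S (@comp C _ _ _ h (alpha x)))).
  { intros x b h. cbn in *. rewrite fS, comp_assoc, <- (natB (S x) b h), <- comp_assoc, tri1.
    now rewrite comp_id_r. }
  assert (R1 : forall x (b : {x : C | PB x}) (h h' : Hom (proj1_sig (S x)) (proj1_sig b)),
    @comp C _ _ _ h (alpha x) = @comp C _ _ _ h' (alpha x) -> h = h').
  { intros x b h h' E. cbn in *. rewrite (R1' x b h), (R1' x b h'), E. reflexivity. }
  assert (F1 : forall x (b : {x : C | PB x}) (k : Hom x (proj1_sig b)),
    @comp C _ _ _ (@comp C _ _ _ (beta b) (fmap S k)) (alpha x) = k).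
  { intros x b k. cbn in *. rewrite <- comp_assoc, natA, comp_assoc, tri2. apply comp_id_l. }
  assert (C1' : forall (d : {x : C | PD x}) y (h : Hom (proj1_sig d) (proj1_sig (T y))),
    h = @comp C _ _ _ (fmap T (@comp C _ _ _ (eps y) h)) (gamma d)).
  { intros d y h. cbn in *. rewrite fT, <- comp_assoc, (natG d (T y) h), comp_assoc, tri4.
    now rewrite comp_id_l. }
  assert (C1 : forall (d : {x : C | PD x}) y (h h' : Hom (proj1_sig d) (proj1_sig (T y))),
    @comp C _ _ _ (eps y) h = @comp C _ _ _ (eps y) h' -> h = h').
  { intros d y h h' E. cbn in *. rewrite (C1' d y h), (C1' d y h'), E. reflexivity. }
  assert (F2 : forall (d : {x : C | PD x}) y (k : Hom (proj1_sig d) y),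
    @comp C _ _ _ (eps y) (@comp C _ _ _ (fmap T k) (gamma d)) = k).
  { intros d y k. cbn in *. rewrite comp_assoc, <- natE, <- comp_assoc, tri3. apply comp_id_r. }
  unfold full, faithful; cbn.
  split; split.
  - intros a b g.
    destruct (hISeps (proj1_sig a)) as [i [i1 i2]].
    exists (@comp C _ _ _ (@comp C _ _ _ (@comp C _ _ _ (beta b) (fmap S (@comp C _ _ _ (eps (proj1_sig b)) g))) i) (alpha (proj1_sig a))).
    apply (C1 (T (proj1_sig a)) (proj1_sig b)).
    cbn.     rewrite <- natE, <- comp_assoc, <- natA, comp_assoc.
    rewrite <- (comp_assoc _ i _).
    rewrite i1, comp_id_r. apply F1.
  - intros a b f f' H.
    rewrite <- (F1 _ b f), <- (F1 _ b f'). cbn. f_equal. f_equal.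
    destruct (hISeps (proj1_sig a)) as [i [i1 i2]].
    assert (E : @comp C _ _ _ f (eps (proj1_sig a)) = @comp C _ _ _ f' (eps (proj1_sig a))).
    { cbn. rewrite !natE, H. reflexivity. }
    apply (f_equal (fun u => fmap S u)) in E. cbn in E. rewrite !fS in E.
    apply (f_equal (fun u => @comp C _ _ _ u i)) in E.
    rewrite <- !comp_assoc, i2, !comp_id_r in E. exact E.
  - intros a b g.
    destruct (hJTalpha (proj1_sig b)) as [j [j1 j2]].
    exists (@comp C _ _ _ (eps (proj1_sig b)) (@comp C _ _ _ j (@comp C _ _ _ (fmap T (@comp C _ _ _ g (alpha (proj1_sig a)))) (gamma a)))).
    apply (R1 (proj1_sig a) (S (proj1_sig b))).
    cbn. rewrite natA, comp_assoc, natE, <- comp_assoc.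
    rewrite (comp_assoc _ j _), j2, comp_id_l. apply F2.
  - intros a b f f' H.
    rewrite <- (F2 a _ f), <- (F2 a _ f'). cbn. f_equal. f_equal.
    destruct (hJTalpha (proj1_sig b)) as [j [j1 j2]].
    assert (E : @comp C _ _ _ (alpha (proj1_sig b)) f = @comp C _ _ _ (alpha (proj1_sig b)) f').
    { cbn. rewrite <- !natA, H. reflexivity. }
    apply (f_equal (fun u => fmap T u)) in E. cbn in E. rewrite !fT in E.
    apply (f_equal (fun u => @comp C _ _ _ j u)) in E.
    rewrite !comp_assoc, j1, !comp_id_l in E. exact E.
Qed.
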